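(* Let $x_j$ be a real random variable and $\boldsymbol{x}_C$ a random vector independent of $x_j$. If $f(x_j,\boldsymbol{x}_C)=g_1(x_j)h_1(\boldsymbol{x}_C)+\cdots+g_k(x_j)h_k(\boldsymbol{x}_C)$, where $g_1,\dots,g_k$ are functions of $x_j$ only and $h_1,\dots,h_k$ are functions of $\boldsymbol{x}_C$ only, then $$\mathbb{E}_{\boldsymbol{x}_C}\big[I_{ice}(x_j;\boldsymbol{x}_C)\big]\ge I_{pdp}(x_j).$$
   Context: Inputs are $\boldsymbol{x}=(x_1,\dots,x_m)$ with independent components; $C=\{1,\dots,m\}\setminus\{j\}$ and $\boldsymbol{x}_C$ denotes the vector of the inputs with indices in $C$. $\mathbb{E}_{z}$ and $\mathbb{V}_{z}$ denote expectation and variance taken with respect to the random variable $z$ only, the other arguments being held fixed. For a fixed value of $\boldsymbol{x}_C$, the ICE importance is $I_{ice}(x_j;\boldsymbol{x}_C)=\sqrt{\mathbb{V}_{x_j}[f(x_j,\boldsymbol{x}_C)]}$. The PDP importance is $I_{pdp}(x_j)=\sqrt{\mathbb{V}_{x_j}\big[\mathbb{E}_{\boldsymbol{x}_C}[f(x_j,\boldsymbol{x}_C)]\big]}$. All expectations, variances and covariances involved are assumed to exist and be finite. *)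

(* Defs.v *)
From HB Require Import structures.
From mathcomp Require Import all_boot all_order all_algebra.
From mathcomp Require Import all_classical all_reals all_analysis.
Set Implicit Arguments. Unset Strict Implicit. Unset Printing Implicit Defensive.
Import Order.TTheory GRing.Theory Num.Theory.
Local Open Scope ring_scope.
Local Open Scope classical_set_scope.

Section Defs.
Context (R : realType).

Definition Expect d (T : measurableType d) (P : probability T R) (u : T -> R) : R :=
  Rintegral P setT u.

Definition Var d (T : measurableType d) (P : probability T R) (u : T -> R) : R :=
  Expect P (fun t => (u t - Expect P u) ^+ 2).

(* ICE importance: Pj = law of x_j, f : x_j -> x_C -> R *)
Definition I_ice d (T : measurableType d) (Pj : probability R R)
  (f : R -> T -> R) (xC : T) : R :=
  Num.sqrt (Var Pj (fun xj => f xj xC)).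

(* PDP importance: PC = law of x_C *)
Definition I_pdp d (T : measurableType d) (Pj : probability R R)
  (PC : probability T R) (f : R -> T -> R) : R :=
  Num.sqrt (Var Pj (fun xj => Expect PC (fun xC => f xj xC))).
End Defs.

(* Main.v *)
Require Import Defs.
From HB Require Import structures.
From mathcomp Require Import all_boot all_order all_algebra.
From mathcomp Require Import all_classical all_reals all_analysis.
From mathcomp Require Import measurable_realfun.
From mathcomp Require Import zify ring lra.
From Stdlib Require Import Lia.
Import Order.TTheory GRing.Theory Num.Theory.
Local Open Scope ring_scope.
Local Open Scope classical_set_scope.
Section Span.
Variables (F : fieldType) (X : Type) (k : nat) (a : X -> 'rV[F]_k).

Definition rows_in {n} (B : 'M[F]_(n, k)) := forall m, exists x, row m B = a x.

Lemma span_ind (d : nat) : forall n (B : 'M[F]_(n, k)), rows_in B -> leq (k - mxrank B) d ->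
  exists n' (B' : 'M[F]_(n', k)), rows_in B' /\ forall x, (a x <= B')%MS.
Proof.
elim: d => [|d IH] n B rB hd.
  exists n, B; split => // x; apply: contrapT => /negP nx.
  have sB : (B <= col_mx B (a x))%MS by rewrite -addsmxE addsmxSl.
  have lt : (\rank B < \rank (col_mx B (a x)))%N.
    by rewrite (ltn_leqif (mxrank_leqif_sup sB)) col_mx_sub submx_refl (negbTE nx).
  have := rank_leq_col (col_mx B (a x)).
  move: hd lt; lia.
have [allin|] := pselect (forall x, (a x <= B)%MS); first by exists n, B.
move=> /existsNP[x /negP nx].
have sB : (B <= col_mx B (a x))%MS by rewrite -addsmxE addsmxSl.
have lt : (\rank B < \rank (col_mx B (a x)))%N.
  by rewrite (ltn_leqif (mxrank_leqif_sup sB)) col_mx_sub submx_refl (negbTE nx).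
apply: (IH _ (col_mx B (a x))).
  move=> m; case: (split_ordP m) => [i ->|i ->].
    by rewrite rowKu; exact: rB.
  by exists x; rewrite rowKd (ord1 i); apply/rowP => j; rewrite !mxE.
have := rank_leq_col (col_mx B (a x)).
move: hd lt; lia.
Qed.

Lemma span_fin : exists n (p : 'I_n -> X) (M : 'M[F]_(k, n)),
  forall x, a x = \sum_(m < n) (a x *m M) 0 m *: a (p m).
Proof.
have [n [B [rB hB]]] := @span_ind k 0 0 (fun m => match (notF (ltn_ord m)) with end) (leq_subr _ _).
have [p hp] := choice rB.
exists n, p, (pinvmx B) => x.
by rewrite -[LHS](mulmxKpV (hB x)) mulmx_sum_row; apply: eq_bigr => m _; rewrite hp.
Qed.
End Span.

Lemma span_dot (F : fieldType) (X : Type) (k : nat) (a : X -> 'rV[F]_k) :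
  exists n (p : 'I_n -> X) (M : 'M[F]_(k, n)), forall x (y : 'I_k -> F),
    \sum_(i < k) a x 0 i * y i =
    \sum_(m < n) (a x *m M) 0 m * \sum_(i < k) a (p m) 0 i * y i.
Proof.
have [n [p [M hM]]] := @span_fin _ _ _ a.
exists n, p, M => x y.
rewrite {1}(hM x).
under eq_bigr do rewrite summxE mulr_suml.
rewrite exchange_big /=; apply: eq_bigr => m _.
rewrite mulr_sumr; apply: eq_bigr => i _.
by rewrite mxE mulrA.
Qed.
Lemma eqi (R : realType) d' (T' : measurableType d') (mu : measure T' R) (f g : T' -> \bar R) :
  mu.-integrable setT f -> (forall x, f x = g x) -> mu.-integrable setT g.
Proof. by move=> h e; apply: (eq_integrable measurableT f) h => x _; exact: e. Qed.

Section L2.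
Context (R : realType) (d : measure_display) (T : measurableType d) (P : probability T R).

Definition L2 (u : T -> R) := measurable_fun setT u /\ P.-integrable setT (fun x => (u x ^+ 2)%:E).

Lemma int_cst (c : R) : P.-integrable setT (fun _ => c%:E).
Proof. exact: (finite_measure_integrable_cst P c measurableT). Qed.

Lemma L2_int u : L2 u -> P.-integrable setT (fun x => (u x)%:E).
Proof.
move=> [mu iu].
have h : P.-integrable setT (fun x => (1 + u x ^+ 2)%:E).
  by apply: (@eqi _ _ _ P _ _ (integrableD measurableT (int_cst 1) iu)) => x /=; rewrite EFinD.
apply: le_integrable h => //; first exact/measurable_EFinP.
move=> x _ /=; rewrite lee_fin (@ger0_norm _ (1 + _)); last by rewrite addr_ge0 // sqr_ge0.
rewrite -real_normK ?num_real //. have := sqr_ge0 (`|u x| - 1); have := normr_ge0 (u x); nra.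
Qed.

Lemma L2_mul u v : L2 u -> L2 v -> P.-integrable setT (fun x => (u x * v x)%:E).
Proof.
move=> [mu iu] [mv iv].
have h : P.-integrable setT (fun x => (u x ^+ 2 + v x ^+ 2)%:E).
  by apply: (@eqi _ _ _ P _ _ (integrableD measurableT iu iv)) => x /=; rewrite EFinD.
apply: le_integrable h => //; first by apply/measurable_EFinP; exact: measurable_funM.
move=> x _ /=; rewrite lee_fin normrM (@ger0_norm _ (_ + _)); last by rewrite addr_ge0 // sqr_ge0.
rewrite -(real_normK (num_real (u x))) -(real_normK (num_real (v x))).
have := sqr_ge0 (`|u x| - `|v x|); have := normr_ge0 (u x); have := normr_ge0 (v x); nra.
Qed.

Lemma L2_add u v : L2 u -> L2 v -> L2 (fun x => u x + v x).
Proof.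
move=> [mu iu] [mv iv]; split; first exact: measurable_funD.
have h : P.-integrable setT (fun x => (2 * u x ^+ 2 + 2 * v x ^+ 2)%:E).
  apply: (@eqi _ _ _ P _ _ (integrableD measurableT (integrableZl measurableT 2 iu) (integrableZl measurableT 2 iv))).
  by move=> x /=; rewrite EFinD !EFinM.
apply: le_integrable h => //.
  by apply/measurable_EFinP; apply: measurable_funX; exact: measurable_funD.
move=> x _ /=; rewrite lee_fin (ger0_norm (sqr_ge0 _)) ger0_norm; last by rewrite addr_ge0 // mulr_ge0 // sqr_ge0.
have := sqr_ge0 (u x - v x); nra.
Qed.

Lemma L2_scale c u : L2 u -> L2 (fun x => c * u x).
Proof.
move=> [mu iu]; split; first exact: measurable_funM.
apply: (@eqi _ _ _ P _ _ (integrableZl measurableT (c ^+ 2) iu)).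
by move=> x /=; rewrite -EFinM exprMn.
Qed.

Lemma L2_cst c : L2 (fun _ => c).
Proof. split; [exact: measurable_cst | exact: int_cst]. Qed.

Lemma L2_sum (I : Type) (s : seq I) (h : I -> T -> R) :
  (forall i, L2 (h i)) -> L2 (fun x => \sum_(i <- s) h i x).
Proof.
move=> hh; elim: s => [|i s IH].
  by apply: (proj1 (iff_refl _)); under eq_fun do rewrite big_nil; exact: L2_cst.
by under eq_fun do rewrite big_cons; exact: L2_add.
Qed.

Lemma Rint_sum (I : Type) (s : seq I) (h : I -> T -> R) :
  (forall i, P.-integrable setT (fun x => (h i x)%:E)) ->
  Expect P (fun x => \sum_(i <- s) h i x) = \sum_(i <- s) Expect P (h i).
Proof.
move=> hh; elim: s => [|i s IH].
  rewrite big_nil /Expect; under eq_Rintegral do rewrite big_nil.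
  by rewrite Rintegral_cst // mul0r.
rewrite big_cons -IH /Expect; under eq_Rintegral do rewrite big_cons.
rewrite RintegralD //; first exact: hh.
apply: (@eqi _ _ _ P _ _ (integrable_sum measurableT s (P:=xpredT) (fun i _ => hh i))).
by move=> x /=; rewrite sumEFin.
Qed.

Lemma Expect_ge0 u : (forall x, 0 <= u x) -> 0 <= Expect P u.
Proof. by move=> h; apply: Rintegral_ge0. Qed.

Lemma CS u v : L2 u -> L2 v -> 0 < Expect P (fun x => u x ^+ 2) ->
  Expect P (fun x => u x * v x) <=
  Num.sqrt (Expect P (fun x => u x ^+ 2)) * Num.sqrt (Expect P (fun x => v x ^+ 2)).
Proof.
move=> Lu Lv A0.
set A := Expect P (fun x => u x ^+ 2); set C := Expect P (fun x => v x ^+ 2).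
set B := Expect P (fun x => u x * v x).
have C0 : 0 <= C by apply: Expect_ge0 => x; exact: sqr_ge0.
set t := B / A.
have key : 2 * t * B <= t ^+ 2 * A + C.
  have e1 : Expect P (fun x => 2 * t * (u x * v x)) = 2 * t * B.
    by rewrite /Expect RintegralZl //; exact: L2_mul.
  have e2 : Expect P (fun x => t ^+ 2 * u x ^+ 2 + v x ^+ 2) = t ^+ 2 * A + C.
    rewrite /Expect RintegralD //; last exact: Lv.2.
      by rewrite RintegralZl //; exact: Lu.2.
    exact: (integrableZl measurableT _ Lu.2).
  rewrite -e1 -e2 /Expect; apply: le_Rintegral => //.
  - by apply: (@eqi _ _ _ P _ _ (integrableZl measurableT (2 * t) (L2_mul _ _ Lu Lv))) => x /=; rewrite EFinM.
  - by apply: (@eqi _ _ _ P _ _ (integrableD measurableT (integrableZl measurableT (t ^+ 2) Lu.2) Lv.2)) => x /=; rewrite EFinD EFinM.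

  - move=> x _; have := sqr_ge0 (t * u x - v x); nra.
have hB : B ^+ 2 <= A * C.
  have : 2 * t * B = B ^+ 2 / A * 2 by rewrite /t; field; rewrite gt_eqF.
  have : t ^+ 2 * A = B ^+ 2 / A by rewrite /t; field; rewrite gt_eqF.
  move=> h1 h2; rewrite h1 h2 in key.
  have : B ^+ 2 / A <= C by lra.
  by rewrite ler_pdivrMr // mulrC.
rewrite -sqrtrM ?(ltW A0) //; apply: le_trans (ler_norm B) _.
rewrite -sqrtr_sqr; exact: ler_wsqrtr.
Qed.
End L2.
Arguments L2 {R d T} P u.
Arguments int_cst {R d T} P c.
Arguments L2_int {R d T P u}.
Arguments L2_mul {R d T P u v}.
Arguments L2_add {R d T P u v}.
Arguments L2_scale {R d T P} c {u}.
Arguments L2_cst {R d T} P c.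
Arguments L2_sum {R d T P I} s {h}.
Arguments Rint_sum {R d T} P {I} s {h}.
Arguments Expect_ge0 {R d T} P {u}.
Arguments CS {R d T P u v}.
Arguments eqi {R d' T'} mu {f g}.

Section Main.
Context (R : realType) (Pj : probability R R) (d : measure_display) (T : measurableType d)
  (PC : probability T R).

Lemma analytic (s : nat) (al : 'I_s -> R -> R) (be : 'I_s -> T -> R) (f : R -> T -> R)
  (hal : forall l, L2 Pj (al l))
  (hbe : forall l, PC.-integrable setT (fun x => (be l x)%:E))
  (hf : forall xj xC, f xj xC = \sum_(l < s) al l xj * be l xC)
  (int_ice : PC.-integrable setT (fun xC => (I_ice Pj f xC)%:E)) :
  I_pdp Pj PC f <= Expect PC (I_ice Pj f).
Proof.
pose Y (y : 'I_s -> R) xj := \sum_(l < s) y l * al l xj.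
pose ea l := Expect Pj (al l).
pose alc l xj := al l xj - ea l.
have Lalc : forall l, L2 Pj (alc l) by move=> l; exact: (L2_add (hal l) (L2_cst Pj (- ea l))).
pose Yc (y : 'I_s -> R) xj := \sum_(l < s) y l * alc l xj.
have LYc : forall y, L2 Pj (Yc y) by move=> y; apply: L2_sum => l; exact: L2_scale.
have EY : forall y, Expect Pj (Y y) = \sum_(l < s) y l * ea l.
  move=> y; rewrite /Y (Rint_sum Pj) => [|l].
    by apply: eq_bigr => l _; rewrite /Expect RintegralZl //; exact: L2_int.
  exact: (@eqi _ _ _ Pj _ _ (integrableZl measurableT (y l) (L2_int (hal l)))).
have VarY : forall y, Var Pj (Y y) = Expect Pj (fun xj => Yc y xj ^+ 2).
  move=> y; rewrite /Var EY; congr (Expect Pj _); apply/funext => xj.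
  by rewrite /Y /Yc -sumrB; congr (_ ^+ 2); apply: eq_bigr => l _; rewrite /alc mulrBr.
pose b l := Expect PC (be l).
pose g l := Expect Pj (fun xj => Yc b xj * alc l xj).
have Bz : forall z, Expect Pj (fun xj => Yc b xj * Yc z xj) = \sum_(l < s) z l * g l.
  move=> z.
  have -> : (fun xj => Yc b xj * Yc z xj) = (fun xj => \sum_(l < s) z l * (Yc b xj * alc l xj)).
    by apply/funext => xj; rewrite /Yc mulr_sumr; apply: eq_bigr => l _; rewrite mulrCA.
  rewrite (Rint_sum Pj) => [|l].
    by apply: eq_bigr => l _; rewrite /Expect RintegralZl //; exact: L2_mul.
  exact: (@eqi _ _ _ Pj _ _ (integrableZl measurableT (z l) (L2_mul (LYc b) (Lalc l)))).
have EF : (fun xj => Expect PC (fun xC => f xj xC)) = Y b.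
  apply/funext => xj; rewrite /Y.
  have -> : (fun xC => f xj xC) = (fun xC => \sum_(l < s) al l xj * be l xC) by apply/funext => xC; exact: hf.
  rewrite (Rint_sum PC) => [|l].
    by apply: eq_bigr => l _; rewrite /Expect RintegralZl; [exact: mulrC | done | exact: hbe].
  exact: (@eqi _ _ _ PC _ _ (integrableZl measurableT (al l xj) (hbe l))).
pose beC xC l := be l xC.
have Iice : forall xC, I_ice Pj f xC = Num.sqrt (Expect Pj (fun xj => Yc (beC xC) xj ^+ 2)).
  move=> xC; rewrite /I_ice -VarY; congr (Num.sqrt (Var Pj _)); apply/funext => xj.
  by rewrite hf /Y; apply: eq_bigr => l _; rewrite mulrC.
rewrite /I_pdp EF VarY.
set Qb := Expect Pj (fun xj => Yc b xj ^+ 2).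
have Q0 : 0 <= Qb by apply: Expect_ge0 => xj; exact: sqr_ge0.
have [Qz|Qn] := eqVneq Qb 0.
  by rewrite Qz sqrtr0; apply: Expect_ge0 => xC; exact: sqrtr_ge0.
have Qpos : 0 < Qb by rewrite lt_def Qn Q0.
have key : forall xC, \sum_(l < s) be l xC * g l <= Num.sqrt Qb * I_ice Pj f xC.
  move=> xC; rewrite Iice; have := Bz (beC xC); rewrite /beC => <-.
  exact: (CS (LYc b) (LYc (beC xC)) Qpos).
have intL : PC.-integrable setT (fun xC => (\sum_(l < s) be l xC * g l)%:E).
  apply: (@eqi _ _ _ PC _ _ (integrable_sum measurableT (index_enum 'I_s) (P:=xpredT)
     (h := fun l xC => (g l * be l xC)%:E) (fun l _ => integrableZl measurableT (g l) (hbe l)))).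
  by move=> xC /=; rewrite sumEFin; congr (_%:E); apply: eq_bigr => l _; rewrite mulrC.
have intR : PC.-integrable setT (fun xC => (Num.sqrt Qb * I_ice Pj f xC)%:E).
  exact: (integrableZl measurableT (Num.sqrt Qb) int_ice).
have ineq := le_Rintegral measurableT intL intR (fun xC _ => key xC).
rewrite RintegralZl // in ineq.
have eL : \int[PC]_(x in setT) (\sum_(l < s) be l x * g l) = Qb.
  have := Rint_sum PC (index_enum 'I_s) (h := fun l xC => be l xC * g l).
  rewrite /Expect => ->; last first.
    move=> l; apply: (@eqi _ _ _ PC _ _ (integrableZl measurableT (g l) (hbe l))) => x /=.
    by rewrite -EFinM mulrC.
  rewrite (eq_bigr (fun l => b l * g l)); last first.
    by move=> l _; rewrite RintegralZr //; exact: hbe.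
  rewrite -Bz /Qb; congr (Expect Pj _); apply/funext => xj; by rewrite expr2.
rewrite eL -{1}(sqr_sqrtr Q0) expr2 ler_pM2l ?sqrtr_gt0 // in ineq.
Qed.
End Main.

Theorem theorem3 (R : realType) (d : measure_display) (T : measurableType d)
  (Pj : probability R R) (PC : probability T R)
  (k : nat) (g : 'I_k -> R -> R) (h : 'I_k -> T -> R) (f : R -> T -> R)
  (hg : forall i, measurable_fun setT (g i))
  (hh : forall i, measurable_fun setT (h i))
  (hf : forall xj xC, f xj xC = \sum_(i < k) g i xj * h i xC)
  (int_ice_var : forall xC, Pj.-integrable setT (fun xj => ((f xj xC) ^+ 2)%:E))
  (int_pdp_mean : forall xj, PC.-integrable setT (fun xC => (f xj xC)%:E))
  (int_pdp_var : Pj.-integrable setT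
     (fun xj => ((Expect PC (fun xC => f xj xC)) ^+ 2)%:E))
  (int_ice : PC.-integrable setT (fun xC => (I_ice Pj f xC)%:E)) :
  Expect PC (fun xC => I_ice Pj f xC) >= I_pdp Pj PC f.
Proof.
have mf : forall t, measurable_fun setT (fun x => f x t).
  move=> t; rewrite (_ : (fun x => f x t) = fun x => \sum_(i < k) g i x * h i t); last first.
    by apply/funext => x; exact: hf.
  by apply: measurable_sum => i; exact: (measurable_funM (hg i) (measurable_cst _)).
have Lf : forall t, L2 Pj (fun x => f x t) by move=> t; split; [exact: mf | exact: int_ice_var].
have [n [p [M hM]]] := @span_dot _ _ _ (fun t : T => \row_(i < k) h i t).
have step1 : forall xj t, f xj t = \sum_(m < n) ((\row_i h i t) *m M) 0 m * f xj (p m).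
  move=> xj t; rewrite hf.
  rewrite (eq_bigr (fun i => (\row_i h i t) 0 i * g i xj)); last first.
    by move=> i _; rewrite mxE mulrC.
  rewrite hM; apply: eq_bigr => m _; congr (_ * _); rewrite hf.
  by apply: eq_bigr => i _; rewrite mxE mulrC.
pose c1 m t := ((\row_i h i t) *m M) 0 m.
have [n2 [q [M2 hM2]]] := @span_dot _ _ _ (fun xj : R => \row_(m < n) f xj (p m)).
pose al l xj := ((\row_(m < n) f xj (p m)) *m M2) 0 l.
apply: (@analytic R Pj d T PC n2 al (fun l t => f (q l) t)).
- move=> l.
  have -> : al l = fun xj => \sum_(m < n) M2 m l * f xj (p m).
    by apply/funext => xj; rewrite /al mxE; apply: eq_bigr => m _; rewrite mxE mulrC.
  by apply: L2_sum => m; apply: L2_scale.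
- by move=> l; exact: int_pdp_mean.
- move=> xj t; rewrite step1.
  rewrite (eq_bigr (fun m => (\row_(m < n) f xj (p m)) 0 m * c1 m t)); last first.
    by move=> m _; rewrite mxE mulrC.
  rewrite hM2; apply: eq_bigr => l _; congr (_ * _); rewrite (step1 (q l) t).
  by apply: eq_bigr => m _; rewrite mxE mulrC.
- exact: int_ice.
Qed.
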